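(* Fix a prime $p$ and an integer $h\ge 1$, and work in the category $\mathcal{C}_{p^h}$ (defined in the context). Let $\iota_R\colon (A,I_A,\psi_A)\to (R,I_R,\psi_R)$ and $\iota_S\colon (A,I_A,\psi_A)\to (S,I_S,\psi_S)$ be morphisms in $\mathcal{C}_{p^h}$. Suppose that $I_R=\iota_R(I_A)R$ and that $(S,I_S,\psi_S)$ is complete and perfect. Let $\mu\colon R\to S$ be a ring homomorphism with $\mu\iota_R=\iota_S$. Then there exists a unique morphism $\widehat\mu\colon (R,I_R,\psi_R)\to (S,I_S,\psi_S)$ in $\mathcal{C}_{p^h}$ such that $\widehat\mu\iota_R=\iota_S$ and $\widehat\mu(x)\equiv \mu(x) \bmod I_S$ for all $x\in R$.
   Context: $\mathcal{C}_{p^h}$ is the category whose objects are triples $(R,I_R,\psi_R)$ with $R$ a commutative ring, $I_R\subseteq R$ an ideal with $p\in I_R$, and $\psi_R\colon R\to R$ a ring endomorphism such that $\psi_R(x)\equiv x^{p^h}\bmod I_R$ for all $x\in R$. A morphism $(R,I_R,\psi_R)\to(S,I_S,\psi_S)$ is a ring homomorphism $\mu\colon R\to S$ with $\mu(I_R)\subseteq I_S$ and $\mu\psi_R=\psi_S\mu$. An object is complete if $R\to\lim_k R/I_R^k$ is an isomorphism, and perfect if $\psi_R$ is an isomorphism with $\psi_R(I_R)=I_R$. *)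

(* Defs.v *)
From HB Require Import structures.
From mathcomp Require Import all_boot all_order all_algebra.
Set Implicit Arguments. Unset Strict Implicit. Unset Printing Implicit Defensive.
Import GRing.Theory.
Local Open Scope ring_scope.

Section Defs.
Variable R : comPzRingType.

Definition is_ideal (I : R -> Prop) : Prop :=
  [/\ I 0, (forall x y, I x -> I y -> I (x + y)), (forall x, I x -> I (- x))
    & (forall a x, I x -> I (a * x))].

Definition gen_ideal (G : R -> Prop) : R -> Prop :=
  fun x => forall J, is_ideal J -> (forall y, G y -> J y) -> J x.

Definition ideal_pow (I : R -> Prop) (k : nat) : R -> Prop :=
  gen_ideal (fun x => exists s : seq R,
    [/\ size s = k, (forall y, y \in s -> I y) & x = \prod_(y <- s) y]).

Definition Cph_obj (p h : nat) (I : R -> Prop) (psi : R -> R) : Prop :=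
  [/\ is_ideal I, I (p%:R) & forall x, I (psi x - x ^+ (p ^ h))].

(* Completeness: R -> lim_k R/I^k is an isomorphism.  Elements of the inverse
   limit are represented by compatible sequences (x_k) with
   x_{k+1} = x_k mod I^k, two sequences being identified when x_k = y_k mod I^k
   for all k; the canonical map sends x to the constant sequence. *)
Definition complete (I : R -> Prop) : Prop :=
  (forall x y : R, (forall k, ideal_pow I k (x - y)) -> x = y) /\
  (forall u : nat -> R, (forall k, ideal_pow I k (u k.+1 - u k)) ->
     exists x : R, forall k, ideal_pow I k (x - u k)).

Definition perfect (I : R -> Prop) (psi : R -> R) : Prop :=
  bijective psi /\ (forall y, I y <-> exists2 x, I x & psi x = y).
End Defs.

Definition Cph_morph (R S : comPzRingType) (IR : R -> Prop) (psiR : R -> R)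
  (IS : S -> Prop) (psiS : S -> S) (mu : {rmorphism R -> S}) : Prop :=
  (forall x, IR x -> IS (mu x)) /\ (forall x, mu (psiR x) = psiS (mu x)).

(* Main.v *)
Require Import Defs.
From HB Require Import structures.
From mathcomp Require Import all_boot all_order all_algebra.
From mathcomp Require Import ring.
Set Implicit Arguments. Unset Strict Implicit. Unset Printing Implicit Defensive.
Import GRing.Theory.
Local Open Scope ring_scope.

Section Ideals.
Variable T : comPzRingType.
Implicit Types (I J G : T -> Prop).

Lemma gen_is_ideal G : is_ideal (gen_ideal G).
Proof.
split.
- by move=> J [] *.
- by move=> x y hx hy J hJ hG; case: (hJ) => _ hD _ _; apply: hD; [apply: hx|apply: hy].
- by move=> x hx J hJ hG; case: (hJ) => _ _ hN _; apply: hN; apply: hx.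
- by move=> a x hx J hJ hG; case: (hJ) => _ _ _ hM; apply: hM; apply: hx.
Qed.

Lemma gen_sub G x : G x -> gen_ideal G x.
Proof. by move=> gx J _ hG; apply: hG. Qed.

Lemma gen_min G J : is_ideal J -> (forall y, G y -> J y) -> forall x, gen_ideal G x -> J x.
Proof. by move=> hJ hG x hx; apply: hx. Qed.

Lemma id0 J (hJ : is_ideal J) : J 0. Proof. by case: hJ. Qed.
Lemma idD J (hJ : is_ideal J) x y : J x -> J y -> J (x + y). Proof. by case: hJ=> _ h _ _; apply: h. Qed.
Lemma idN J (hJ : is_ideal J) x : J x -> J (- x). Proof. by case: hJ=> _ _ h _; apply: h. Qed.
Lemma idB J (hJ : is_ideal J) x y : J x -> J y -> J (x - y).
Proof. by move=> hx hy; apply: (idD hJ) => //; apply: (idN hJ). Qed.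
Lemma idMl J (hJ : is_ideal J) a x : J x -> J (a * x). Proof. by case: hJ=> _ _ _ h; apply: h. Qed.
Lemma idMr J (hJ : is_ideal J) a x : J x -> J (x * a).
Proof. by move=> hx; rewrite mulrC; apply: (idMl hJ). Qed.

Lemma pow_ideal I k : is_ideal (ideal_pow I k). Proof. exact: gen_is_ideal. Qed.

Lemma pow0 I x : ideal_pow I 0 x.
Proof.
have -> : x = x * 1 by rewrite mulr1.
apply: (idMl (pow_ideal _ _)).
apply: gen_sub; exists [::]; split => //; by rewrite big_nil.
Qed.

Lemma pow1 I x : is_ideal I -> ideal_pow I 1 x -> I x.
Proof.
move=> hI; apply: gen_min => // y [s [hs hin ->]].
case: s hs hin => [|z [|]] //= _ hin.
by rewrite big_seq1; apply: hin; rewrite mem_seq1.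
Qed.

Lemma pow1' I x : I x -> ideal_pow I 1 x.
Proof.
move=> hx; apply: gen_sub; exists [:: x]; split => //.
  by move=> y; rewrite mem_seq1 => /eqP ->.
by rewrite big_seq1.
Qed.

Lemma powS I k x : ideal_pow I k.+1 x -> ideal_pow I k x.
Proof.
apply: gen_min; first exact: pow_ideal.
move=> y [[|z s] [hs hin ->]] //.
rewrite big_cons; apply: (idMl (pow_ideal _ _)).
apply: gen_sub; exists s; split => //; first by case: hs.
by move=> w hw; apply: hin; rewrite inE hw orbT.
Qed.

Lemma powle I k m : (k <= m)%N -> forall x, ideal_pow I m x -> ideal_pow I k x.
Proof.
move=> /subnK <-; elim: (m - k)%N => //= n IH x hx.
by apply: IH; apply: powS.
Qed.

Lemma powM I k a b : I a -> ideal_pow I k b -> ideal_pow I k.+1 (a * b).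
Proof.
move=> ha; move: b; apply: (gen_min (J := fun b => ideal_pow I k.+1 (a * b))).
- split.
  + by rewrite mulr0; exact: (id0 (pow_ideal _ _)).
  + by move=> x y hx hy; rewrite mulrDr; by apply: (idD (pow_ideal _ _)).
  + by move=> x hx; rewrite mulrN; by apply: (idN (pow_ideal _ _)).
  + by move=> c x hx; rewrite mulrCA; by apply: (idMl (pow_ideal _ _)).
- move=> y [s [hs hin ->]]; apply: gen_sub; exists (a :: s); split.
  + by rewrite /= hs.
  + by move=> w; rewrite inE => /orP [/eqP ->|/hin].
  + by rewrite big_cons.
Qed.

Lemma pow_map (f : {rmorphism T -> T}) I k :
  (forall x, I x -> I (f x)) -> forall x, ideal_pow I k x -> ideal_pow I k (f x).
Proof.
move=> hf; apply: (gen_min (J := fun x => ideal_pow I k (f x))).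
- split.
  + by rewrite rmorph0; exact: (id0 (pow_ideal _ _)).
  + by move=> x y hx hy; rewrite rmorphD; by apply: (idD (pow_ideal _ _)).
  + by move=> x hx; rewrite rmorphN; by apply: (idN (pow_ideal _ _)).
  + by move=> c x hx; rewrite rmorphM; by apply: (idMl (pow_ideal _ _)).
- move=> y [s [hs hin ->]]; apply: gen_sub; exists (map f s); split.
  + by rewrite size_map.
  + by move=> w /mapP [z hz ->]; apply: hf; apply: hin.
  + by rewrite rmorph_prod big_map.
Qed.

Lemma frob_diff I (hI : is_ideal I) n k a b :
  I n%:R -> (0 < n)%N -> ideal_pow I k.+1 (a - b) -> ideal_pow I k.+2 (a ^+ n - b ^+ n).
Proof.
move=> hn n0 hab.
set d := a - b.
have hd : I d by apply: pow1 => //; apply: (powle _ hab).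
have ea : a = b + d by rewrite /d addrC subrK.
have cl : forall i, exists c, a ^+ i.+1 - b ^+ i.+1 = d * c /\ I (c - i.+1%:R * b ^+ i).
  elim=> [|i [c [e hc]]].
    exists 1; split; first by rewrite !expr1 mulr1.
    by rewrite expr0 mulr1 subrr; exact: (id0 hI).
  exists (a * c + b ^+ i.+1); split.
    rewrite exprS [b ^+ i.+2]exprS.
    have -> : a * a ^+ i.+1 - b * b ^+ i.+1 = a * (a ^+ i.+1 - b ^+ i.+1) + (a - b) * b ^+ i.+1.
      by rewrite mulrBr mulrBl addrA subrK.
    by rewrite e mulrA [a * d]mulrC -mulrA -/d mulrDr.
  have -> : a * c + b ^+ i.+1 - i.+2%:R * b ^+ i.+1
          = b * (c - i.+1%:R * b ^+ i) + d * c.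
    rewrite ea -[i.+2]addn1 natrD !exprS; ring.
  by apply: (idD hI); [apply: (idMl hI) | apply: (idMr hI)].
case: n n0 hn => [|m] // _ hn.
have [c [-> hc]] := cl m.
rewrite mulrC; apply: powM => //.
have -> : c = (c - m.+1%:R * b ^+ m) + m.+1%:R * b ^+ m by rewrite subrK.
by apply: (idD hI) => //; apply: (idMr hI).
Qed.

End Ideals.

Section Inv.
Variables (S : comPzRingType) (s : {rmorphism S -> S}) (t : S -> S)
  (h1 : cancel s t) (h2 : cancel t s).
Definition tinv (_ : cancel s t) (_ : cancel t s) := t.
Lemma tinv_zmod : zmod_morphism (tinv h1 h2).
Proof. by move=> x y; apply: (can_inj h1); rewrite /tinv rmorphB !h2. Qed.
Lemma tinv_mon : monoid_morphism (tinv h1 h2).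
Proof.
split; first by apply: (can_inj h1); rewrite /tinv rmorph1 h2.
by move=> x y; apply: (can_inj h1); rewrite /tinv rmorphM !h2.
Qed.
HB.instance Definition _ := GRing.isZmodMorphism.Build S S (tinv h1 h2) tinv_zmod.
HB.instance Definition _ := GRing.isMonoidMorphism.Build S S (tinv h1 h2) tinv_mon.
End Inv.

Section MkRM.
Variables (R S : comPzRingType) (f : R -> S) (hz : zmod_morphism f) (hm : monoid_morphism f).
Definition mkf (_ : zmod_morphism f) (_ : monoid_morphism f) := f.
HB.instance Definition _ := GRing.isZmodMorphism.Build R S (mkf hz hm) hz.
HB.instance Definition _ := GRing.isMonoidMorphism.Build R S (mkf hz hm) hm.
Definition mkrm : {rmorphism R -> S} := mkf hz hm.
End MkRM.

Lemma gmap_I (A R S : comPzRingType) (IA : A -> Prop) (IR : R -> Prop) (IS : S -> Prop)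
  (iotaR : {rmorphism A -> R}) (hIS : is_ideal IS)
  (hIR : forall x, IR x -> gen_ideal (fun y => exists2 a, IA a & y = iotaR a) x)
  (g : {rmorphism R -> S}) (hg : forall a, IA a -> IS (g (iotaR a))) :
  forall y, IR y -> IS (g y).
Proof.
move=> y /hIR; apply: (gen_min (J := fun y => IS (g y))).
- split.
  + by rewrite rmorph0; exact: (id0 hIS).
  + by move=> x z h3 h4; rewrite rmorphD; exact: (idD hIS).
  + by move=> x h3; rewrite rmorphN; exact: (idN hIS).
  + by move=> a x h3; rewrite rmorphM; exact: (idMl hIS).
- by move=> z [a ha ->]; apply: hg.
Qed.

Lemma step (A R S : comPzRingType) (IA : A -> Prop) (IR : R -> Prop) (IS : S -> Prop)
  (iotaR : {rmorphism A -> R}) (hIS : is_ideal IS)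
  (hIR : forall x, IR x -> gen_ideal (fun y => exists2 a, IA a & y = iotaR a) x)
  (n : nat) (hn : IS n%:R) (n0 : (0 < n)%N) (psiR : R -> R)
  (hpsi : forall x, IR (psiR x - x ^+ n))
  (f g : {rmorphism R -> S}) k (hfg : forall a, f (iotaR a) = g (iotaR a))
  (hg : forall a, IA a -> IS (g (iotaR a)))
  (hD : forall x, ideal_pow IS k.+1 (f x - g x)) :
  forall x, ideal_pow IS k.+2 (f (psiR x) - g (psiR x)).
Proof.
have hJ : forall y, IR y -> IS (g y) /\ ideal_pow IS k.+2 (f y - g y).
  move=> y /hIR; apply: (gen_min (J := fun y => IS (g y) /\ ideal_pow IS k.+2 (f y - g y))).
  - split.
    + by rewrite !rmorph0 subr0; split; [exact: (id0 hIS) | exact: (id0 (pow_ideal _ _))].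
    + move=> x z [h1 h2] [h3 h4]; rewrite !rmorphD; split; first exact: (idD hIS).
      have -> : f x + f z - (g x + g z) = (f x - g x) + (f z - g z) by ring.
      exact: (idD (pow_ideal _ _)).
    + move=> x [h1 h2]; rewrite !rmorphN; split; first exact: (idN hIS).
      have -> : - f x - - g x = - (f x - g x) by ring.
      exact: (idN (pow_ideal _ _)).
    + move=> a x [h1 h2]; rewrite !rmorphM; split; first exact: (idMl hIS).
      have -> : f a * f x - g a * g x = f a * (f x - g x) + g x * (f a - g a) by ring.
      apply: (idD (pow_ideal _ _)); first exact: (idMl (pow_ideal _ _)).
      exact: powM.
  - move=> z [a ha ->]; rewrite hfg subrr; split; [exact: hg | exact: (id0 (pow_ideal _ _))].
move=> x.
have hi := hpsi x.
move: hi; set i := psiR x - x ^+ n => hi.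
have e : psiR x = x ^+ n + i by rewrite /i addrC subrK.
rewrite e; clearbody i.
rewrite !rmorphD.
have -> : f (x ^+ n) + f i - (g (x ^+ n) + g i) = (f x ^+ n - g x ^+ n) + (f i - g i).
  by rewrite !rmorphXn; ring.
apply: (idD (pow_ideal _ _)); first exact: frob_diff.
exact: (hJ _ hi).2.
Qed.

From Stdlib Require Import ClassicalEpsilon.

Theorem proposition2p1 (p h : nat) (hp : prime p) (hh : (0 < h)%N)
  (A R S : comPzRingType)
  (IA : A -> Prop) (psiA : {rmorphism A -> A})
  (IR : R -> Prop) (psiR : {rmorphism R -> R})
  (IS : S -> Prop) (psiS : {rmorphism S -> S})
  (objA : Cph_obj p h IA psiA) (objR : Cph_obj p h IR psiR)
  (objS : Cph_obj p h IS psiS)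
  (iotaR : {rmorphism A -> R}) (iotaS : {rmorphism A -> S})
  (miR : Cph_morph IA psiA IR psiR iotaR)
  (miS : Cph_morph IA psiA IS psiS iotaS)
  (hIR : forall x, IR x <-> gen_ideal (fun y => exists2 a, IA a & y = iotaR a) x)
  (hcompl : complete IS) (hperf : perfect IS psiS)
  (mu : {rmorphism R -> S}) (hmu : forall a, mu (iotaR a) = iotaS a) :
  exists muhat : {rmorphism R -> S},
    [/\ Cph_morph IR psiR IS psiS muhat,
        (forall a, muhat (iotaR a) = iotaS a),
        (forall x, IS (muhat x - mu x))
      & (forall nu : {rmorphism R -> S},
           Cph_morph IR psiR IS psiS nu ->
           (forall a, nu (iotaR a) = iotaS a) ->
           (forall x, IS (nu x - mu x)) ->
           forall x, nu x = muhat x)].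
Proof.
case: objS => hIS hpS hqS; case: objR => _ _ hqR.
set q := (p ^ h)%N in hqS hqR.
have hq : IS q%:R.
  have -> : q = (p * p ^ h.-1)%N by rewrite /q -expnS prednK.
  rewrite natrM; exact: (idMr hIS).
have q0 : (0 < q)%N by rewrite /q expn_gt0 prime_gt0.
case: hperf => [[t h1 h2] hpI].
have psiI : forall x, IS x -> IS (psiS x) by move=> x hx; apply/hpI; exists x.
have tI : forall y, IS y -> IS (t y).
  by move=> y /hpI [x hx <-]; rewrite h1.
pose ti : {rmorphism S -> S} := tinv h1 h2.
have tiE : forall y, ti y = t y by [].
have hiR : forall x, IR x -> gen_ideal (fun y => exists2 a, IA a & y = iotaR a) x.
  by move=> x /hIR.
have gI : forall g : {rmorphism R -> S}, (forall a, g (iotaR a) = iotaS a) ->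
    forall a, IA a -> IS (g (iotaR a)).
  by move=> g hg a ha; rewrite hg; apply: miS.1.
have stp := step hIS hiR hq q0 hqR.
have [inj surj] := hcompl.
pose fix mun n : {rmorphism R -> S} :=
  if n is m.+1 then (ti \o mun m \o psiR : {rmorphism R -> S}) else mu.
have munS : forall n x, mun n.+1 x = t (mun n (psiR x)) by [].
have agree : forall n a, mun n (iotaR a) = iotaS a.
  elim=> [|n IH] a //; rewrite munS -miR.2 IH miS.2; exact: h1.
have diff : forall n x, ideal_pow IS n.+1 (mun n.+1 x - mun n x).
  elim=> [|n IH] x.
    apply: pow1'; rewrite munS /=.
    have -> : t (mu (psiR x)) - mu x = t (mu (psiR x) - psiS (mu x)).
      by rewrite -!tiE rmorphB !tiE h1.
    apply: tI.
    have -> : mu (psiR x) - psiS (mu x)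
        = mu (psiR x - x ^+ q) - (psiS (mu x) - mu x ^+ q).
      by rewrite rmorphB rmorphXn; ring.
    apply: (idB hIS); last exact: hqS.
    exact: (gmap_I hIS hiR (gI _ hmu)).
  have -> : mun n.+2 x - mun n.+1 x = ti (mun n.+1 (psiR x) - mun n (psiR x)).
    by rewrite rmorphB.
  apply: pow_map; first exact: tI.
  apply: stp => //.
  - by move=> a; rewrite !agree.
  - exact: gI (agree n).
have lim : forall x, {y | forall k, ideal_pow IS k (y - mun k x)}.
  move=> x; apply: constructive_indefinite_description.
  by apply: surj => k; apply: powS; apply: diff.
pose mh x := sval (lim x).
have hmh : forall x k, ideal_pow IS k (mh x - mun k x) by move=> x; exact: (svalP (lim x)).
have hz : zmod_morphism mh.
  move=> x y; apply: inj => k.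
  have -> : mh (x - y) - (mh x - mh y)
     = (mh (x - y) - mun k (x - y)) - (mh x - mun k x) + (mh y - mun k y).
    by rewrite rmorphB; ring.
  apply: (idD (pow_ideal _ _)); last exact: hmh.
  by apply: (idB (pow_ideal _ _)); apply: hmh.
have hm : monoid_morphism mh.
  split.
    apply: inj => k; have := hmh 1 k; by rewrite rmorph1.
  move=> x y; apply: inj => k.
  have -> : mh (x * y) - mh x * mh y
     = (mh (x * y) - mun k (x * y)) - (mh x * (mh y - mun k y)
        + mun k y * (mh x - mun k x)).
    by rewrite rmorphM; ring.
  apply: (idB (pow_ideal _ _)); first exact: hmh.
  by apply: (idD (pow_ideal _ _)); apply: (idMl (pow_ideal _ _)); apply: hmh.
pose muhat : {rmorphism R -> S} := mkrm hz hm.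
have muhatE : forall x, muhat x = mh x by [].
have mhI : forall x, IR x -> IS (mh x).
  move=> x hx.
  have -> : mh x = (mh x - mun 1 x) + mun 1 x by rewrite subrK.
  apply: (idD hIS); first exact: (pow1 hIS (hmh x 1)).
  exact: (gmap_I hIS hiR (gI _ (agree 1))).
have mhpsi : forall x, mh (psiR x) = psiS (mh x).
  move=> x; apply: inj => k.
  have -> : mh (psiR x) - psiS (mh x)
     = (mh (psiR x) - mun k (psiR x)) - psiS (mh x - mun k.+1 x).
    by rewrite rmorphB munS h2; ring.
  apply: (idB (pow_ideal _ _)); first exact: hmh.
  by apply: pow_map => //; apply: powS; apply: hmh.
have mhiota : forall a, mh (iotaR a) = iotaS a.
  by move=> a; apply: inj => k; rewrite -(agree k a); apply: hmh.
have mhmu : forall x, IS (mh x - mu x).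
  move=> x.
  have -> : mh x - mu x = (mh x - mun 1 x) + (mun 1 x - mun 0 x) by rewrite /= addrA subrK.
  by apply: (idD hIS); apply: (pow1 hIS); [exact: (hmh x 1) | exact: (diff 0 x)].
exists muhat; split.
- by split => x; rewrite !muhatE; [apply: mhI | apply: mhpsi].
- exact: mhiota.
- exact: mhmu.
- move=> nu [nuI nupsi] nuiota numu.
  have key : forall k x, ideal_pow IS k.+1 (nu x - muhat x).
    elim=> [|k IH] x.
      apply: pow1'; rewrite muhatE.
      have -> : nu x - mh x = (nu x - mu x) - (mh x - mu x) by ring.
      apply: (idB hIS); first exact: numu.
      exact: mhmu.
    have -> : nu x - muhat x = ti (nu (psiR x) - muhat (psiR x)).
      by rewrite rmorphB nupsi !muhatE mhpsi !tiE !h1.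
    apply: pow_map; first exact: tI.
    apply: stp => //.
    + by move=> a; rewrite nuiota muhatE mhiota.
    + by apply: gI => a; rewrite muhatE mhiota.
  by move=> x; apply: inj => k; apply: powS; apply: key.
Qed.
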